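(* Let $R$ be a ring and $n\ge 1$. Then $R$ is almost Armendariz if and only if the upper triangular matrix ring $T_n(R)$ is almost Armendariz.
   Context: All rings are associative with identity. For a ring $R$, $P(R)$ denotes the prime radical of $R$ (the intersection of all prime ideals of $R$, equivalently the set of strongly nilpotent elements of $R$). A ring $R$ is called almost Armendariz if whenever $f(x)=\sum_{i=0}^m a_ix^i$ and $g(x)=\sum_{j=0}^n b_jx^j\in R[x]$ satisfy $f(x)g(x)=0$, then $a_ib_j\in P(R)$ for all $0\le i\le m$, $0\le j\le n$. $T_n(R)$ denotes the ring of $n\times n$ upper triangular matrices over $R$. *)

(* Defs.v *)
From HB Require Import structures.
From mathcomp Require Import all_boot all_order all_algebra.
Set Implicit Arguments. Unset Strict Implicit. Unset Printing Implicit Defensive.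
Import GRing.Theory.
Local Open Scope ring_scope.

Definition is_ideal (R : nzRingType) (I : R -> Prop) : Prop :=
  [/\ I 0,
      (forall x y, I x -> I y -> I (x - y)),
      (forall r x, I x -> I (r * x)) &
      (forall r x, I x -> I (x * r))].

(** Prime ideal: proper ideal P such that for ideals A, B with AB ⊆ P,
    A ⊆ P or B ⊆ P.  (AB ⊆ P iff all products a*b lie in P.) *)
Definition is_prime_ideal (R : nzRingType) (P : R -> Prop) : Prop :=
  [/\ is_ideal P, ~ P 1 &
      forall A B : R -> Prop, is_ideal A -> is_ideal B ->
        (forall a b, A a -> B b -> P (a * b)) ->
        (forall a, A a -> P a) \/ (forall b, B b -> P b)].

Definition prime_radical (R : nzRingType) (x : R) : Prop :=
  forall P : R -> Prop, is_prime_ideal P -> P x.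

Definition almost_armendariz (R : nzRingType) : Prop :=
  forall f g : {poly R}, f * g = 0 ->
    forall i j : nat, (i < size f)%N -> (j < size g)%N ->
      prime_radical (f`_i * g`_j).

Definition uptri (R : nzRingType) (m : nat) : {pred 'M[R]_m.+1} :=
  fun A => [forall i : 'I_m.+1, forall j : 'I_m.+1, (j < i)%N ==> (A i j == 0)].

Lemma uptri_subring_closed (R : nzRingType) (m : nat) :
  subring_closed (@uptri R m).
Proof.
split.
- apply/forallP=> i; apply/forallP=> j; apply/implyP=> lt_ji.
  by rewrite !mxE (_ : (i == j) = false) // eq_sym; apply: ltn_eqF.
- move=> A B /forallP HA /forallP HB.
  apply/forallP=> i; apply/forallP=> j; apply/implyP=> lt_ji.
  move: (HA i) (HB i) => /forallP/(_ j)/implyP/(_ lt_ji)/eqP a0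
                          /forallP/(_ j)/implyP/(_ lt_ji)/eqP b0.
  by rewrite !mxE a0 b0 subr0.
- move=> A B /forallP HA /forallP HB.
  apply/forallP=> i; apply/forallP=> j; apply/implyP=> lt_ji.
  rewrite !mxE; apply/eqP; apply: big1 => k _.
  case: (ltnP k i) => [lt_ki | le_ik].
  + by move: (HA i) => /forallP/(_ k)/implyP/(_ lt_ki)/eqP ->; rewrite mul0r.
  + have lt_jk : (j < k)%N by apply: leq_trans lt_ji le_ik.
    by move: (HB k) => /forallP/(_ j)/implyP/(_ lt_jk)/eqP ->; rewrite mulr0.
Qed.

HB.instance Definition _ (R : nzRingType) (m : nat) :=
  GRing.isSubringClosed.Build _ (@uptri R m) (uptri_subring_closed R m).

Definition uptri_mat (R : nzRingType) (m : nat) := {A : 'M[R]_m.+1 | A \in @uptri R m}.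

HB.instance Definition _ (R : nzRingType) (m : nat) := [isSub for (@sval _ _ : uptri_mat R m -> _)].
HB.instance Definition _ (R : nzRingType) (m : nat) := [Choice of uptri_mat R m by <:].
HB.instance Definition _ (R : nzRingType) (m : nat) :=
  [SubChoice_isSubNzRing of uptri_mat R m by <:].

(** T_n(R): n x n upper triangular matrices over R, for n >= 1
    (the carrier uses size n.-1.+1, which is n when n >= 1). *)
Definition T_ (n : nat) (R : nzRingType) : nzRingType := uptri_mat R n.-1.

(* Main.v *)
Require Import Defs.
From HB Require Import structures.
From mathcomp Require Import all_boot all_order all_algebra.
From Stdlib Require Import Classical_Prop.
Import GRing.Theory.
Local Open Scope ring_scope.

Lemma idealD (S : nzRingType) (Q : S -> Prop) x y :
  is_ideal Q -> Q x -> Q y -> Q (x + y).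
Proof.
case=> H0 HB _ _ qx qy; have := HB x (0 - y) qx (HB _ _ H0 qy).
by rewrite sub0r opprK.
Qed.

Lemma ideal_sum (S : nzRingType) (Q : S -> Prop) I (s : seq I) (F : I -> S) :
  is_ideal Q -> (forall i, Q (F i)) -> Q (\sum_(i <- s) F i).
Proof.
move=> HQ H; elim/big_ind: _ => //; first by case: HQ.
by move=> x y; apply: idealD.
Qed.

Lemma aa_all (S : nzRingType) : almost_armendariz S <->
  forall f g : {poly S}, f * g = 0 -> forall i j, prime_radical (f`_i * g`_j).
Proof.
split => [h f g fg i j | h f g fg i j _ _]; last exact: h.
case: (ltnP i (size f)) => [hi|hi]; last first.
  by rewrite (nth_default _ hi) mul0r => P [[H0 _ _ _] _ _].
case: (ltnP j (size g)) => [hj|hj]; last first.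
  by rewrite (nth_default _ hj) mulr0 => P [[H0 _ _ _] _ _].
exact: h.
Qed.

Section S.
Variables (R : nzRingType) (m : nat).
Local Notation T := (uptri_mat R m).
Implicit Types X Y : T.

Lemma uptriP X {i j : 'I_m.+1} : (j < i)%N -> val X i j = 0.
Proof.
move=> lt; case: X => A /= /forallP H.
by move: (H i) => /forallP/(_ j)/implyP/(_ lt)/eqP.
Qed.

Lemma valsum I (s : seq I) (F : I -> T) :
  val (\sum_(i <- s) F i) = \sum_(i <- s) val (F i).
Proof. by elim/big_rec2: _ => // i a b _ <-. Qed.

Lemma diag_mul X Y (k : 'I_m.+1) : val (X * Y) k k = val X k k * val Y k k.
Proof.
rewrite /= mxE (bigD1 k) //= big1 ?addr0 // => l /negbTE nlk.
case: (ltnP l k) => [lt|ge]; first by rewrite (uptriP X lt) mul0r.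
have lt : (k < l)%N.
  rewrite ltn_neqAle ge andbT; apply/eqP => e.
  by move: nlk; rewrite (ord_inj e) eqxx.
by rewrite (uptriP Y lt) mulr0.
Qed.

Lemma scal_proof (r : R) : (r%:M : 'M[R]_m.+1) \in @uptri R m.
Proof.
apply/forallP => i; apply/forallP => j; apply/implyP => lt.
by rewrite mxE (_ : (i == j) = false) // eq_sym; apply: ltn_eqF.
Qed.
Definition scal (r : R) : T := exist (fun A => A \in @uptri R m) _ (scal_proof r).

Definition Emx (k : 'I_m.+1) (r : R) : 'M[R]_m.+1 :=
  \matrix_(i, j) (if (i == k) && (j == k) then r else 0).
Lemma Emat_proof k r : Emx k r \in @uptri R m.
Proof.
apply/forallP => i; apply/forallP => j; apply/implyP => lt.
rewrite mxE; case: (i =P k) => [ei | _] //=; case: (j =P k) => [ej | _] //=.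
by move: lt; rewrite ei ej ltnn.
Qed.
Definition Emat k r : T := exist (fun A => A \in @uptri R m) _ (Emat_proof k r).

Lemma Emat_val k r i j : val (Emat k r) i j = if (i == k) && (j == k) then r else 0.
Proof. by rewrite /= mxE. Qed.

Lemma EmatB k x y : Emat k (x - y) = Emat k x - Emat k y.
Proof.
apply: val_inj; apply/matrixP => i j; rewrite /= !mxE.
by case: ifP; rewrite ?subr0.
Qed.

Lemma EmatML k r x : Emat k (r * x) = scal r * Emat k x.
Proof.
apply: val_inj; rewrite /=; change (Emx k (r * x) = r%:M *m Emx k x); rewrite mul_scalar_mx; apply/matrixP => i j; rewrite !mxE.
by case: ifP; rewrite ?mulr0.
Qed.

Lemma mulmx_scalar_r (A : 'M[R]_m.+1) r : A *m r%:M = \matrix_(i, j) (A i j * r).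
Proof.
apply/matrixP => i j; rewrite !mxE (bigD1 j) //= big1 ?addr0.
  by rewrite mxE eqxx mulr1n.
by move=> l /negbTE nl; rewrite mxE nl mulr0n mulr0.
Qed.

Lemma EmatMR k r x : Emat k (x * r) = Emat k x * scal r.
Proof.
apply: val_inj; rewrite /=; change (Emx k (x * r) = Emx k x *m r%:M) ; rewrite mulmx_scalar_r; apply/matrixP => i j; rewrite !mxE.
by case: ifP; rewrite ?mul0r.
Qed.

Definition J d X := forall i j : 'I_m.+1, (j < i + d)%N -> val X i j = 0.

Lemma J_ideal d : is_ideal (J d).
Proof.
split.
- by move=> i j _; rewrite /= mxE.
- by move=> X Y hX hY i j lt; rewrite /= !mxE hX // hY // subrr.
- move=> r X hX i j lt; rewrite /= mxE big1 // => l _.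
  case: (ltnP l i) => [li|il]; first by rewrite (uptriP r li) mul0r.
  by rewrite hX ?mulr0 // (leq_trans lt) // leq_add2r.
- move=> r X hX i j lt; rewrite /= mxE big1 // => l _.
  case: (ltnP j l) => [jl|lj]; first by rewrite (uptriP r jl) mulr0.
  by rewrite hX ?mul0r // (leq_ltn_trans lj lt).
Qed.

Lemma J_mul a b X Y : J a X -> J b Y -> J (a + b) (X * Y).
Proof.
move=> hX hY i j lt; rewrite /= mxE big1 // => l _.
case: (ltnP l (i + a)) => [la|al]; first by rewrite hX ?mul0r.
by rewrite hY ?mulr0 // (leq_trans lt) // addnA leq_add2r.
Qed.

Lemma J_mono a b X : (a <= b)%N -> J b X -> J a X.
Proof. by move=> ab h i j lt; apply: h; rewrite (leq_trans lt) // leq_add2l. Qed.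

Lemma J_zero d X : (m.+1 <= d)%N -> J d X -> X = 0.
Proof.
move=> le h; apply: val_inj; apply/matrixP => i j; rewrite /= mxE h //.
exact: (leq_trans (ltn_ord j) (leq_trans le (leq_addl i d))).
Qed.

Variable Q : T -> Prop.
Hypothesis HP : is_prime_ideal Q.

Lemma J1Q X : J 1 X -> Q X.
Proof.
have key : forall k d, (0 < d)%N -> (m.+1 <= d + k)%N -> forall X, J d X -> Q X.
  elim => [|k IH] d d0 le X0 hX.
    have -> : X0 = 0 by apply: (J_zero d X0) => //; rewrite addn0 in le.
    by case: HP => [[]].
  case: HP => Hid _ Hpr.
  have H : forall a b, J d a -> J d b -> Q (a * b).
    move=> a b ha hb; apply: (IH d.+1) => //; first by rewrite addSnnS.
    apply: (J_mono d.+1 (d + d) (a * b)); last exact: J_mul.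
    by rewrite -(addn1 d) leq_add2l.
  by case: (Hpr _ _ (J_ideal d) (J_ideal d) H) => /(_ X0 hX).
by move=> hX; apply: (key m 1) => //; rewrite add1n.
Qed.

Lemma splitE (k : 'I_m.+1) (Z : T) : (forall l, l != k -> val Z l l = 0) ->
  J 1 (Z - Emat k (val Z k k)).
Proof.
move=> hZ i j lt.
have -> : val (Z - Emat k (val Z k k)) i j = val Z i j - val (Emat k (val Z k k)) i j.
  by rewrite /= !mxE.
rewrite Emat_val.
case: (ltnP j i) => [ji|ij].
  rewrite (uptriP Z ji); case: ifP => [/andP[/eqP ei /eqP ej]|_].
    by move: ji; rewrite ei ej ltnn.
  by rewrite subr0.
have e : i = j.
  apply: ord_inj; apply/eqP; rewrite eqn_leq ij /=; by rewrite addn1 ltnS in lt.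
subst j; rewrite andbb; case: (i =P k) => [->|/eqP ne]; first by rewrite subrr.
by rewrite hZ // subr0.
Qed.

Definition Pk (k : 'I_m.+1) (r : R) := Q (Emat k r).

Lemma Pk_ideal (k : 'I_m.+1) : is_ideal (Pk k).
Proof.
case: HP => [[H0 HB HL HR] _ _]; split; rewrite /Pk.
- have -> : Emat k 0 = 0.
    by apply: val_inj; apply/matrixP => i j; rewrite /= !mxE; case: ifP.
  exact: H0.
- by move=> x y hx hy; rewrite EmatB; apply: HB.
- by move=> r x hx; rewrite EmatML; apply: HL.
- by move=> r x hx; rewrite EmatMR; apply: HR.
Qed.

Definition lift (k : 'I_m.+1) (A : R -> Prop) (X : T) :=
  A (val X k k) /\ forall l, l != k -> val X l l = 0.

Lemma lift_ideal (k : 'I_m.+1) (A : R -> Prop) : is_ideal A -> is_ideal (lift k A).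
Proof.
case=> A0 AB AL AR; split.
- by split; [rewrite /= mxE | move=> l _; rewrite /= mxE].
- move=> X Y [hX1 hX2] [hY1 hY2]; split.
    have -> : val (X - Y) k k = val X k k - val Y k k by rewrite /= !mxE.
    exact: AB.
  by move=> l hl; rewrite /= !mxE hX2 // hY2 // subrr.
- move=> r X [h1 h2]; split; first by rewrite diag_mul; apply: AL.
  by move=> l hl; rewrite diag_mul h2 // mulr0.
- move=> r X [h1 h2]; split; first by rewrite diag_mul; apply: AR.
  by move=> l hl; rewrite diag_mul h2 // mul0r.
Qed.

Lemma EQ (k : 'I_m.+1) (r : R) : prime_radical r -> Q (Emat k r).
Proof.
move=> hr.
have Hid := Pk_ideal k.
case: (classic (Pk k 1)) => h1.
  rewrite -[r]mulr1 EmatML; case: HP => [[_ _ HL _] _ _]; exact: HL.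
apply: (hr (Pk k)); split => // A B hA hB hAB.
case: HP => HQ _ Hpr.
have Hprod : forall X Y, lift k A X -> lift k B Y -> Q (X * Y).
  move=> X Y [hX1 hX2] [hY1 hY2].
  have -> : X * Y = Emat k (val (X * Y) k k) + (X * Y - Emat k (val (X * Y) k k)).
    by rewrite addrC subrK.
  apply: idealD => //; first by rewrite diag_mul; apply: hAB.
  apply: J1Q; apply: splitE => l hl; by rewrite diag_mul hX2 // mul0r.
case: (Hpr _ _ (lift_ideal k A hA) (lift_ideal k B hB) Hprod) => H; [left|right];
  move=> a ha; apply: H; (split; [by rewrite Emat_val eqxx | ]);
  by move=> l hl; rewrite Emat_val (negbTE hl).
Qed.

Lemma diagQ X : (forall k, prime_radical (val X k k)) -> Q X.
Proof.
move=> h.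
case: HP => HQ _ _.
set D := \sum_(k < m.+1) Emat k (val X k k).
have -> : X = D + (X - D) by rewrite addrC subrK.
apply: idealD => //; first by apply: ideal_sum => // k; exact: EQ.
apply: J1Q => i j lt.
have vD : val D i j = if i == j then val X i i else 0.
  rewrite /D valsum summxE (bigD1 i) //= big1 ?addr0.
    by rewrite Emat_val eqxx /= eq_sym.
  by move=> l /negbTE nl; rewrite Emat_val (eq_sym i) nl.
have -> : val (X - D) i j = val X i j - val D i j by rewrite /= !mxE.
rewrite vD; case: (ltnP j i) => [ji|ij].
  by rewrite (uptriP X ji) (_ : (i == j) = false) ?subr0 // eq_sym; apply: ltn_eqF.
have e : i = j.
  apply: ord_inj; apply/eqP; rewrite eqn_leq ij /=; by rewrite addn1 ltnS in lt.
by subst j; rewrite eqxx subrr.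
Qed.

End S.

Lemma QP_prime (R : nzRingType) (m : nat) (P : R -> Prop) : is_prime_ideal P ->
  is_prime_ideal (fun X : uptri_mat R m => P (val X ord0 ord0)).
Proof.
case=> [[H0 HB HL HR] H1 Hpr]; split.
- split.
  + by rewrite /= mxE.
  + by move=> X Y hX hY; rewrite /= !mxE; apply: HB.
  + by move=> r X hX; rewrite diag_mul; apply: HL.
  + by move=> r X hX; rewrite diag_mul; apply: HR.
- by rewrite /= mxE eqxx mulr1n.
- move=> A B hA hB hAB.
  have iA : forall C : uptri_mat R m -> Prop, is_ideal C ->
      is_ideal (fun r => exists X, C X /\ val X ord0 ord0 = r).
    move=> C [C0 CB CL CR]; split.
    + by exists 0; split => //; rewrite /= mxE.
    + move=> x y [X [hX <-]] [Y [hY <-]]; exists (X - Y).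
      by split; [exact: CB | rewrite /= !mxE].
    + move=> r x [X [hX <-]]; exists (scal R m r * X).
      by split; [exact: CL | rewrite diag_mul /= mxE eqxx mulr1n].
    + move=> r x [X [hX <-]]; exists (X * scal R m r).
      by split; [exact: CR | rewrite diag_mul /= mxE eqxx mulr1n].
  have Hm : forall a b, (exists X, A X /\ val X ord0 ord0 = a) ->
      (exists X, B X /\ val X ord0 ord0 = b) -> P (a * b).
    by move=> a b [X [hX <-]] [Y [hY <-]]; rewrite -diag_mul; apply: hAB.
  case: (Hpr _ _ (iA A hA) (iA B hB) Hm) => h; [left|right];
    by move=> X hX; apply: h; exists X.
Qed.

Lemma dir1 (R : nzRingType) (m : nat) :
  almost_armendariz R -> almost_armendariz (uptri_mat R m).
Proof.
move=> /aa_all hR; apply/aa_all => F G FG i j Q HQ.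
apply: (@diagQ R m Q HQ) => k; rewrite diag_mul.
have h0 : (fun X : uptri_mat R m => val X k k) 0 = 0 by rewrite /= mxE.
suff fg0 : map_poly (fun X : uptri_mat R m => val X k k) F *
   map_poly (fun X : uptri_mat R m => val X k k) G = 0.
  by have := hR _ _ fg0 i j; rewrite !(coef_map_id0 _ _ h0).
apply/polyP => l; rewrite coefM coef0.
transitivity (val ((F * G)`_l) k k); last by rewrite FG coef0 /= mxE.
rewrite coefM valsum summxE; apply: eq_bigr => j' _.
by rewrite !(coef_map_id0 _ _ h0) diag_mul.
Qed.

Lemma dir2 (R : nzRingType) (m : nat) :
  almost_armendariz (uptri_mat R m) -> almost_armendariz R.
Proof.
move=> /aa_all hT; apply/aa_all => f g fg i j P HP.
have hs0 : scal R m 0 = 0.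
  by apply: val_inj; apply/matrixP => a b; rewrite /= !mxE mul0rn.
pose F := map_poly (scal R m) f; pose G := map_poly (scal R m) g.
have FG : F * G = 0.
  apply/polyP => l; rewrite coefM coef0; apply: val_inj; rewrite valsum.
  apply/matrixP => a b; rewrite summxE [RHS]/= mxE.
  transitivity (((f * g)`_l) *+ (a == b)); last by rewrite fg coef0 mul0rn.
  rewrite coefM -sumrMnl; apply: eq_bigr => j' _.
  rewrite !(coef_map_id0 _ _ hs0) /=.
  change (((f`_j')%:M *m (g`_(l - j'))%:M) a b = (f`_j' * g`_(l - j')) *+ (a == b)).
  by rewrite -scalar_mxM mxE.
have := hT F G FG i j (fun X => P (val X ord0 ord0)) (@QP_prime R m P HP).
by rewrite diag_mul !(coef_map_id0 _ _ hs0) /= !mxE eqxx !mulr1n.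
Qed.

Theorem proposition2p1 (R : nzRingType) (n : nat) (hn : (1 <= n)%N) :
  almost_armendariz R <-> almost_armendariz (T_ n R).
Proof. by split; [exact: (@dir1 R n.-1) | exact: (@dir2 R n.-1)]. Qed.
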